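(* Consider the path graph on $n$ nodes with Laplacian $L_n$ and a set of control (observation) nodes $I_o=\{i_1<i_2<\dots<i_m\}\subset\{1,\dots,n\}$. The path is reachable (observable) from $I_o$ if and only if the matrices $N_{i_1-1}, M_{i_2-i_1-1},\dots,M_{i_m-i_{m-1}-1}, N_{n-i_m}$ do not have a common eigenvalue (an eigenvalue shared by all of them). The eigenvalues common to all these matrices are exactly the unreachable (unobservable) eigenvalues of $L_n$ from $I_o$.
   Context: The path graph on nodes $\{1,\dots,n\}$ has edges $\{i,i+1\}$; $L_n$ is tridiagonal with diagonal $(1,2,\dots,2,1)$ and off-diagonal $-1$. With $B=[e_{i_1}|\cdots|e_{i_m}]$, reachable from $I_o$ means $(L_n,B)$ is reachable, observable means $(L_n,B^T)$ is observable. An unreachable (unobservable) eigenvalue is $\lambda$ such that some $v\ne0$ satisfies $L_nv=\lambda v$ and $(v)_j=0$ for all $j\in I_o$. $N_\nu$ ($\nu\times\nu$) is tridiagonal with diagonal $(1,2,\dots,2)$ and off-diagonal $-1$; $M_\mu$ ($\mu\times\mu$) is tridiagonal with diagonal all $2$ and off-diagonal $-1$. A matrix of size $0\times0$ is regarded as having no eigenvalues. *)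

(* Defs.v *)
From HB Require Import structures.
From mathcomp Require Import all_boot all_order all_algebra.
Set Implicit Arguments. Unset Strict Implicit. Unset Printing Implicit Defensive.
Import Order.TTheory GRing.Theory Num.Theory.
Local Open Scope ring_scope.

(* Nodes of the path are indexed 0..n-1 (node k+1 of the paper is k here). *)

Section Defs.
Variable R : rcfType.

Definition path_adj (n : nat) (i j : 'I_n) : bool :=
  (i.+1 == j :> nat) || (j.+1 == i :> nat).

Definition pathLap (n : nat) : 'M[R]_n :=
  \matrix_(i, j) (if i == j then (#|[set k | path_adj i k]|)%:R
                  else if path_adj i j then -1 else 0).

Definition Nmat (nu : nat) : 'M[R]_nu :=
  \matrix_(i, j) (if i == j then (if val i == 0%N then 1 else 2)
                  else if path_adj i j then -1 else 0).

Definition Mmat (mu : nat) : 'M[R]_mu :=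
  \matrix_(i, j) (if i == j then 2 else if path_adj i j then -1 else 0).

Definition inputMat (n : nat) (Io : {set 'I_n}) : 'M[R]_(n, #|Io|) :=
  \matrix_(i, j) (if i == enum_val j then 1 else 0).

Definition reachable (n p : nat) (A : 'M[R]_n) (B : 'M[R]_(n, p)) : bool :=
  \rank (\mxrow_(k < n) (A ^+ k *m B)) == n.

Definition observable (n p : nat) (A : 'M[R]_n) (C : 'M[R]_(p, n)) : bool :=
  \rank (\mxcol_(k < n) (C *m A ^+ k)) == n.

Definition unreachable_eig (n : nat) (Io : {set 'I_n}) (lam : R) : Prop :=
  exists v : 'cV[R]_n, [/\ v != 0, pathLap n *m v = lam *: v &
                         forall j, j \in Io -> v j 0 = 0].

Definition ctrl_seq (n : nat) (Io : {set 'I_n}) : seq nat :=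
  [seq val i | i <- enum Io].

(* lam is an eigenvalue of every one of
   N_{i_1-1}, M_{i_2-i_1-1}, ..., M_{i_m-i_{m-1}-1}, N_{n-i_m}
   (1-based i_k in the paper; s = 0-based list here). *)
Definition common_eig (n : nat) (Io : {set 'I_n}) (lam : R) : Prop :=
  let s := ctrl_seq Io in
  [/\ eigenvalue (Nmat (head 0%N s)) lam,
      (forall k, (k.+1 < size s)%N ->
         eigenvalue (Mmat (nth 0%N s k.+1 - nth 0%N s k - 1)) lam)
    & eigenvalue (Nmat (n - (last 0%N s).+1)) lam].

End Defs.

(* Main.v *)
Require Import Defs.
From HB Require Import structures.
From mathcomp Require Import all_boot all_order all_algebra.
From mathcomp Require Import ring lra zify.
From mathcomp Require Import complex.
Set Implicit Arguments. Unset Strict Implicit. Unset Printing Implicit Defensive.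
Import Order.TTheory GRing.Theory Num.Theory.
Local Open Scope ring_scope.

Section Seq.
Variables (R : rcfType) (l : R).

Fixpoint sq2 (a b : R) (k : nat) : R * R :=
  if k is k'.+1 then let: (x, y) := sq2 a b k' in (y, (2 - l) * y - x) else (a, b).
Definition sq a b k := (sq2 a b k).1.

Lemma sq2_fst a b k : (sq2 a b k.+1).1 = (sq2 a b k).2.
Proof. by rewrite /=; case: (sq2 a b k). Qed.

Lemma sq0 a b : sq a b 0 = a. Proof. by []. Qed.
Lemma sq1 a b : sq a b 1 = b. Proof. by []. Qed.
Lemma sqS2 a b k : sq a b k.+2 = (2 - l) * sq a b k.+1 - sq a b k.
Proof.
rewrite /sq /=; case: (sq2 a b k) => x y /=; by [].
Qed.

Lemma sq2_shift a b k : sq2 a b k.+1 = sq2 b ((2 - l) * b - a) k.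
Proof. by elim: k => [|k IH] //=; rewrite -IH. Qed.

Lemma sq_shift a b k : sq a b k.+1 = sq b ((2 - l) * b - a) k.
Proof. by rewrite /sq sq2_shift. Qed.

Lemma sq_add a b i j : sq a b (i + j) = sq (sq a b i) (sq a b i.+1) j.
Proof.
elim: i a b => [|i IH] a b; first by [].
by rewrite addSn !sq_shift IH -!sq_shift.
Qed.

Lemma sq_lin a b k : sq a b k = a * sq 1 0 k + b * sq 0 1 k.
Proof.
suff: sq a b k = a * sq 1 0 k + b * sq 0 1 k /\
      sq a b k.+1 = a * sq 1 0 k.+1 + b * sq 0 1 k.+1 by case.
elim: k => [|k [IH1 IH2]]; first by split; rewrite /sq /=; ring.
split => //; rewrite !sqS2 IH1 IH2.
move: (sq 1 0 k) (sq 0 1 k) (sq 1 0 k.+1) (sq 0 1 k.+1) => x y z w; ring.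
Qed.

Definition hh := sq 0 1.
Definition gg := sq 1 (1 - l).

Lemma sq10 k : sq 1 0 k.+1 = - hh k.
Proof.
rewrite sq_shift sq_lin /hh; move: (sq 1 0 k) (sq 0 1 k) => x y; ring.
Qed.

Lemma sq_linS a b j : sq a b j.+1 = b * hh j.+1 - a * hh j.
Proof.
rewrite sq_lin sq10 /hh; move: (sq 0 1 j.+1) (sq 0 1 j) => x y; ring.
Qed.

Lemma gg_hh k : gg k = hh k.+1 - hh k.
Proof.
rewrite /hh sq_shift /gg (sq_lin 1 (_ * 1 - 0)) (sq_lin 1 (1 - l)); move: (sq 1 0 k) (sq 0 1 k) => x y; ring.
Qed.

Lemma hh0 : hh 0 = 0. Proof. by []. Qed.
Lemma gg0 : gg 0 = 1. Proof. by []. Qed.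

Lemma sq_two_zeros a b k : sq a b k = 0 -> sq a b k.+1 = 0 -> a = 0 /\ b = 0.
Proof.
elim: k a b => [|k IH] a b; first by [].
rewrite [sq a b k.+1]sq_shift [sq a b k.+2]sq_shift => H1 H2; have [Hb Hc] := IH _ _ H1 H2.
by split => //; move: Hc; rewrite Hb mulr0 sub0r => /eqP; rewrite oppr_eq0 => /eqP.
Qed.

Lemma gg_two_zeros k : gg k = 0 -> gg k.+1 = 0 -> False.
Proof. by move=> H1 H2; case: (sq_two_zeros H1 H2) => /eqP; rewrite oner_eq0. Qed.

End Seq.
Section Tri.
Variable R : rcfType.

Definition ext k (x : 'I_k -> R) (i : nat) : R := \sum_(j < k | val j == i) x j.

Lemma ext_val k (x : 'I_k -> R) (j : 'I_k) : ext x j = x j.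
Proof.
by rewrite /ext (eq_bigl (fun j' => j' == j)) ?big_pred1_eq.
Qed.

Lemma ext_out k (x : 'I_k -> R) i : (k <= i)%N -> ext x i = 0.
Proof.
move=> ki; rewrite /ext big_pred0 // => j.
by apply/negbTE; rewrite neq_ltn (leq_trans (ltn_ord j) ki).
Qed.

Lemma path_adj_sym k (i j : 'I_k) : path_adj i j = path_adj j i.
Proof. by rewrite /path_adj orbC. Qed.

Lemma path_adj_neq k (i j : 'I_k) : path_adj i j -> i != j.
Proof.
by rewrite /path_adj => /orP[] /eqP H; apply/eqP => E; move: H; rewrite E; lia.
Qed.

Definition prevx k (x : 'I_k -> R) (i : nat) : R :=
  if i is i'.+1 then ext x i' else 0.

Lemma sum_adj k (x : 'I_k -> R) (i : 'I_k) :
  \sum_j (if path_adj i j then x j else 0) = prevx x i + ext x i.+1.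
Proof.
have -> : \sum_j (if path_adj i j then x j else 0) =
          \sum_j (if (val j == i.+1)%N then x j else 0) +
          \sum_j (if (val j).+1 == val i then x j else 0).
  rewrite -big_split /=; apply: eq_bigr => j _; rewrite /path_adj.
  rewrite (eq_sym (val j)); case E1: (_ == _); case E2: (_ == _) => /=;
    rewrite ?addr0 ?add0r //.
  by move: E1 E2 => /eqP E1 /eqP E2; lia.
rewrite addrC /prevx /ext -!big_mkcond /=; congr (_ + _).
case: (val i) => [|i']; first by rewrite big_pred0.
by apply: eq_bigl => j; rewrite eqSS.
Qed.

Lemma tri_sum k (d : 'I_k -> R) (x : 'I_k -> R) (i : 'I_k) :
  \sum_j (if i == j then d i else if path_adj i j then -1 else 0) * x j =
  d i * x i - (prevx x i + ext x i.+1).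
Proof.
rewrite -sum_adj.
have -> : \sum_j (if i == j then d i else if path_adj i j then -1 else 0) * x j =
   \sum_j (if i == j then d i * x j else 0) - \sum_j (if path_adj i j then x j else 0).
  rewrite -sumrB; apply: eq_bigr => j _.
  case: eqP => [E|_]; last first.
    by case: (path_adj i j); ring.
  rewrite -E; case H: (path_adj i i); last by rewrite subr0.
  by move: (path_adj_neq H); rewrite eqxx.
congr (_ - _); rewrite -big_mkcond /=.
by rewrite (eq_bigl (fun j => j == i)) ?big_pred1_eq // => j; rewrite eq_sym.
Qed.

End Tri.

Lemma solve_eq (R : rcfType) (a b c d : R) : c = d -> a - b = c - d -> a = b.
Proof. by move=> -> H; apply/eqP; rewrite -subr_eq0 H subrr. Qed.
Lemma solve_eq2 (R : rcfType) (a b c d : R) : c = d -> a - b = d - c -> a = b.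
Proof. by move=> -> H; apply/eqP; rewrite -subr_eq0 H subrr. Qed.
Ltac solve_with E := first [ apply: (solve_eq E); ring | apply: (solve_eq2 E); ring ].

Section Eig.
Variables (R : rcfType) (l : R).


Definition eqn (d0 : R) (e : nat -> R) (j : nat) : Prop :=
  (if j is 0 then d0 else 2) * e j - ((if j is j'.+1 then e j' else 0) + e j.+1) = l * e j.

Lemma tri_solve k d0 (e : nat -> R) :
  (forall j, (j < k)%N -> eqn d0 e j) ->
  forall j, (j <= k)%N -> e j = e 0%N * sq l 1 (d0 - l) j.
Proof.
move=> H.
suff: forall j, (j.+1 <= k)%N -> e j = e 0%N * sq l 1 (d0 - l) j /\
         e j.+1 = e 0%N * sq l 1 (d0 - l) j.+1.
  move=> S [|j] jk; first by rewrite sq0 mulr1.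
  by case: (S j jk).
elim => [|j IH] jk.
  split; first by rewrite sq0 mulr1.
  have := H 0%N jk; rewrite /eqn /= sq1 => E.
  by solve_with E.
have [IH1 IH2] := IH (ltnW jk); split => //.
have := H j.+1 jk; rewrite /eqn /= sqS2 IH1 IH2 => E.
move: E; move: (sq l 1 (d0 - l) j.+1) (sq l 1 (d0 - l) j) => x y E.
solve_with E.
Qed.

Lemma tri_check k d0 (e : nat -> R) :
  (forall j, (j <= k)%N -> e j = sq l 1 (d0 - l) j) ->
  forall j, (j < k)%N -> eqn d0 e j.
Proof.
move=> H [|j] jk; rewrite /eqn.
  by rewrite (H 0%N) // (H 1%N) // sq0 sq1; ring.
rewrite !H ?sqS2 //; try lia.
move: (sq l 1 (d0 - l) j.+1) (sq l 1 (d0 - l) j) => x y; ring.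
Qed.

Definition triM k (d : 'I_k -> R) : 'M[R]_k :=
  \matrix_(i, j) (if i == j then d i else if path_adj i j then -1 else 0).

Lemma triM_row k d (v : 'rV[R]_k) j :
  (v *m triM d) 0 j = d j * v 0 j - (prevx (v 0) j + ext (v 0) j.+1).
Proof.
rewrite mxE -(tri_sum d (v 0) j); apply: eq_bigr => i _; rewrite mxE mulrC.
rewrite eq_sym path_adj_sym; by case: eqP => [->|].
Qed.

Lemma triM_col k d (c : 'cV[R]_k) i :
  (triM d *m c) i 0 = d i * c i 0 - (prevx (c^~ 0) i + ext (c^~ 0) i.+1).
Proof.
by rewrite mxE -(tri_sum d (c^~ 0) i); apply: eq_bigr => j _; rewrite mxE.
Qed.

Definition dfun k (d0 : R) : 'I_k -> R := fun i => if val i == 0%N then d0 else 2.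
Arguments dfun : clear implicits.

Lemma eig_triM k d0 : eigenvalue (triM (dfun k d0)) l <-> sq l 1 (d0 - l) k = 0.
Proof.
split.
  move=> /eigenvalueP [v vE vn0].
  have Heq : forall j, (j < k)%N -> eqn d0 (ext (v 0)) j.
    move=> j jk; have := triM_row (dfun k d0) v (Ordinal jk).
    rewrite vE mxE /dfun /= -[v 0 (Ordinal jk)]/(v 0 (Ordinal jk)).
    rewrite -(ext_val (v 0) (Ordinal jk)) /= => E.
    rewrite /eqn; case: j jk E => [|j] jk /= ->; by [].
  have Hs := tri_solve Heq.
  case: k v vE vn0 Heq Hs => [|k] v vE vn0 Heq Hs.
    by move: vn0; rewrite (_ : v = 0) ?eqxx //; apply/rowP => -[].
  have := Hs k.+1 (leqnn _); rewrite ext_out // => /esym /eqP.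
  rewrite mulf_eq0 => /orP[/eqP e0|/eqP //].
  move: vn0; rewrite (_ : v = 0) ?eqxx //; apply/rowP => j.
  by rewrite mxE -ext_val Hs ?e0 ?mul0r // ltnW.
move=> sk.
case: k sk => [|k] sk; first by move: sk; rewrite sq0 => /eqP; rewrite oner_eq0.
apply/eigenvalueP; exists (\row_j sq l 1 (d0 - l) j); last first.
  by apply/eqP => /rowP /(_ ord0); rewrite !mxE sq0 => /eqP; rewrite oner_eq0.
set v := \row_j _.
have He : forall j, (j <= k.+1)%N -> ext (v 0) j = sq l 1 (d0 - l) j.
  move=> j; rewrite leq_eqVlt => /orP[/eqP ->|jk].
    by rewrite ext_out.
  by rewrite (ext_val (v 0) (Ordinal jk)) mxE.
have Hc := tri_check He.
apply/rowP => j; rewrite triM_row !mxE.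
have := Hc j (ltn_ord j); rewrite /eqn /dfun /prevx (He j (ltnW (ltn_ord j))).
by case: j => [[|j'] jlt] H; exact: H.
Qed.

Lemma eig_N nu : eigenvalue (Nmat R nu) l <-> gg l nu = 0.
Proof.
have -> : Nmat R nu = triM (dfun nu 1) by apply/matrixP => i j; rewrite !mxE.
exact: eig_triM.
Qed.

Lemma eig_M mu : eigenvalue (Mmat R mu) l <-> hh l mu.+1 = 0.
Proof.
have -> : Mmat R mu = triM (dfun mu 2).
  by apply/matrixP => i j; rewrite !mxE /dfun if_same.
rewrite /hh sq_shift mulr1 subr0; exact: eig_triM.
Qed.

End Eig.

Section Lap.
Variables (R : rcfType) (l : R) (n : nat).

Definition dl (i : nat) : R :=
  (if i is 0 then 0 else 1) + (if (i.+1 < n)%N then 1 else 0).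

Definition peq (e : nat -> R) (i : nat) : Prop :=
  dl i * e i - ((if i is i'.+1 then e i' else 0) + e i.+1) = l * e i.

Lemma ext1 (m : nat) : ext (fun _ : 'I_n => (1 : R)) m = if (m < n)%N then 1 else 0.
Proof.
case: ltnP => mn; first by rewrite (ext_val (fun _ : 'I_n => (1:R)) (Ordinal mn)).
by rewrite ext_out.
Qed.

Lemma pathLap_tri : pathLap R n = triM (fun i : 'I_n => dl i).
Proof.
apply/matrixP => i j; rewrite !mxE; case: (i == j) => //.
rewrite -sum1_card natr_sum.
rewrite (eq_bigl (fun k => path_adj i k)); last by move=> k; rewrite inE.
rewrite big_mkcond /= (eq_bigr (fun k => if path_adj i k then (fun _ => (1:R)) k else 0)).
  by rewrite sum_adj /dl /prevx !ext1; case: (val i) (ltn_ord i) => [|i'] //= Hi; rewrite ext1 (ltnW Hi).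
by move=> k _; case: ifP.
Qed.

Lemma pathLap_col (c : 'cV[R]_n) (i : 'I_n) :
  (pathLap R n *m c) i 0 = l * c i 0 <-> peq (ext (c^~ 0)) i.
Proof.
rewrite pathLap_tri triM_col /peq -(ext_val (c^~ 0) i); by [].
Qed.

Lemma path_solve (e : nat -> R) : (0 < n)%N ->
  (forall i, (i < n)%N -> peq e i) -> e n = 0 ->
  (forall j, (j <= n.-1)%N -> e j = e 0%N * gg l j) /\
  e 0%N * (gg l n - gg l n.-1) = 0.
Proof.
move=> n0 Hp en.
have Hs : forall j, (j <= n.-1)%N -> e j = e 0%N * gg l j.
  apply: tri_solve => j jn; have jn' : (j < n)%N by lia.
  have := Hp j jn'.
  rewrite /peq /eqn /dl (_ : (j.+1 < n)%N) ?addr0; last by lia.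
  by case: j jn jn' => [|j] _ _; rewrite ?add0r.
split => //.
have nn : (n.-1 < n)%N by lia.
have := Hp n.-1 nn; rewrite /peq /dl (prednK n0) ltnn addr0 en addr0.
have Hs' := Hs n.-1 (leqnn _); rewrite -(prednK n0) in Hs' *.
move: Hs Hs'; case: n.-1 => [|m] Hs Hs' /=.
  rewrite /gg sq0 sq1 mul0r !add0r => E.
  solve_with E.
rewrite Hs' (Hs m) ?leqnSn // [gg _ m.+2]sqS2 mul1r => E.
move: E; rewrite /gg; move: (sq l 1 (1 - l) m.+1) (sq l 1 (1 - l) m) => x y E.
solve_with E.
Qed.

Lemma path_check (e : nat -> R) : (0 < n)%N ->
  (forall j, (j < n)%N -> e j = gg l j) -> e n = 0 -> gg l n = gg l n.-1 ->
  forall i, (i < n)%N -> peq e i.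
Proof.
move=> n0 He en gn i iN.
have Hc : forall j, (j <= n.-1)%N -> e j = sq l 1 (1 - l) j.
  by move=> j jn; apply: He; lia.
case: (ltnP i n.-1) => ilt.
  have := tri_check Hc ilt; rewrite /peq /eqn /dl (_ : (i.+1 < n)%N) ?addr0; last by lia.
  by case: (i) => [|i']; rewrite ?add0r.
have -> : i = n.-1 by lia.
rewrite /peq /dl (prednK n0) ltnn addr0 en addr0.
have nn : (n.-1 < n)%N by lia.
move: gn; rewrite -(prednK n0) /=.
have Hn := He n.-1 nn.
move: Hn He Hc nn {iN ilt}; case: n.-1 => [|m] Hn He Hc nn /=.
  rewrite Hn /gg sq0 mul0r !add0r sq1 => E.
  solve_with E.
rewrite Hn (He m) ?mul1r; last by lia.
rewrite /gg sqS2.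
move: (sq l 1 (1 - l) m.+1) (sq l 1 (1 - l) m) => x y E.
solve_with E.
Qed.

Lemma unreach_char (Io : {set 'I_n}) : (0 < n)%N ->
  (unreachable_eig Io l <->
   gg l n = gg l n.-1 /\ forall j : 'I_n, j \in Io -> gg l j = 0).
Proof.
move=> n0; split.
  move=> [v [vn0 vE vI]].
  have Hp : forall i, (i < n)%N -> peq (ext (v^~ 0)) i.
    move=> i iN; apply/(pathLap_col v (Ordinal iN)).
    by rewrite vE mxE.
  have [Hs He] := path_solve n0 Hp (ext_out _ (leqnn _)).
  have e0 : ext (v^~ 0) 0%N != 0.
    apply: contraNneq vn0 => e0; apply/eqP/colP => j.
    rewrite mxE -(ext_val (v^~ 0) j) Hs ?e0 ?mul0r //; have := ltn_ord j; lia.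
  split.
    by apply/eqP; rewrite -subr_eq0; move/eqP: He; rewrite mulf_eq0 (negbTE e0).
  move=> j jI; have := vI j jI; rewrite -(ext_val (v^~ 0) j) Hs; last by have := ltn_ord j; lia.
  by move/eqP; rewrite mulf_eq0 (negbTE e0) => /eqP.
move=> [gn gI].
exists (\col_i gg l i); split.
- by apply/eqP => /colP /(_ (Ordinal n0)); rewrite !mxE /gg sq0 => /eqP; rewrite oner_eq0.
- apply/colP => i; rewrite [RHS]mxE; apply/pathLap_col.
  apply: path_check => //; last by rewrite ext_out.
  by move=> j jn; rewrite (ext_val ((\col_i0 gg l i0)^~ 0) (Ordinal jn)) mxE.
- by move=> j jI; rewrite mxE gI.
Qed.

End Lap.

Section Common.
Variables (R : rcfType) (l : R).

Lemma gg_after a j : gg l a = 0 -> gg l (a + j) = gg l a.+1 * hh l j.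
Proof.
move=> ga; rewrite /gg sq_add -/(gg l a) -/(gg l a.+1) ga sq_lin mul0r add0r.
by rewrite /hh.
Qed.

Lemma gg_Sne0 a : gg l a = 0 -> gg l a.+1 != 0.
Proof. by move=> ga; apply/eqP => gb; apply: (gg_two_zeros ga gb). Qed.

Lemma step_char a b : gg l a = 0 -> (a < b)%N -> (gg l b = 0 <-> hh l (b - a) = 0).
Proof.
move=> ga ab; rewrite -{1}(subnKC (ltnW ab)) gg_after //.
split; last by move=> ->; rewrite mulr0.
by move/eqP; rewrite mulf_eq0 (negbTE (gg_Sne0 ga)) => /eqP.
Qed.

Lemma last_char a n : gg l a = 0 -> (a < n)%N ->
  (gg l n = gg l n.-1 <-> gg l (n - a.+1) = 0).
Proof.
move=> ga an.
set nu := (n - a.+1)%N.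
have E1 : n = (a + nu.+1)%N by rewrite /nu; lia.
have E2 : n.-1 = (a + nu)%N by rewrite /nu; lia.
rewrite {1}E1 E2 !gg_after // (gg_hh l nu).
split => [/eqP|/eqP].
  by rewrite -subr_eq0 -mulrBr mulf_eq0 (negbTE (gg_Sne0 ga)) => /eqP.
by rewrite subr_eq0 => /eqP ->.
Qed.

End Common.

Section Common2.
Variables (R : rcfType) (l : R).

Lemma chain (t : seq nat) a : sorted ltn (a :: t) -> gg l a = 0 ->
  ((forall x, x \in t -> gg l x = 0) <->
   forall k, (k < size t)%N -> hh l (nth 0%N t k - nth 0%N (a :: t) k) = 0).
Proof.
elim: t a => [|b t IH] a /= st ga; first by split => // ? ?; rewrite in_nil.
move: st => /andP [ab st].
split.
  move=> H [|k] /= kt; first by apply/(step_char ga ab)/H; rewrite inE eqxx.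
  have gb : gg l b = 0 by apply: H; rewrite inE eqxx.
  apply: ((IH b st gb).1 _ k kt) => x xt; apply: H; by rewrite inE xt orbT.
move=> H.
have gb : gg l b = 0 by apply/(step_char ga ab); exact: (H 0%N).
move=> x; rewrite inE => /orP [/eqP -> //|xt].
by apply: ((IH b st gb).2 _ x xt) => k kt; exact: (H k.+1).
Qed.

Lemma ctrl_sorted n (Io : {set 'I_n}) : sorted ltn (ctrl_seq Io).
Proof.
apply: (subseq_sorted ltn_trans _ (iota_ltn_sorted 0 n)).
rewrite /ctrl_seq -val_enum_ord; apply: map_subseq.
by rewrite enumT /enum_mem -enumT filter_subseq.
Qed.

Lemma ctrl_mem n (Io : {set 'I_n}) (j : 'I_n) : (val j \in ctrl_seq Io) = (j \in Io).
Proof. by rewrite /ctrl_seq mem_map ?mem_enum //; exact: val_inj. Qed.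

Lemma ctrl_lt n (Io : {set 'I_n}) x : x \in ctrl_seq Io -> (x < n)%N.
Proof. by rewrite /ctrl_seq => /mapP [j _ ->]; exact: ltn_ord. Qed.

Lemma common_char n (Io : {set 'I_n}) : Io != set0 ->
  (common_eig Io l <->
   gg l n = gg l n.-1 /\ forall j : 'I_n, j \in Io -> gg l j = 0).
Proof.
move=> Io0.
have allIo : (forall j : 'I_n, j \in Io -> gg l j = 0) <->
             (forall x, x \in ctrl_seq Io -> gg l x = 0).
  split => H.
    by move=> x /mapP [j jI ->]; apply: H; rewrite mem_enum in jI.
  by move=> j jI; apply: H; rewrite ctrl_mem.
rewrite allIo /common_eig.
have : ctrl_seq Io != [::].
  apply: contraNneq Io0 => E; apply/eqP/setP => j; rewrite inE -ctrl_mem E.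
  by [].
have srt := ctrl_sorted Io.
have lt := @ctrl_lt n Io.
case: (ctrl_seq Io) srt lt => // a t srt lt _ /=.
have alast : (last a t < n)%N by apply: lt; exact: mem_last.
have lastin : last a t \in a :: t by exact: mem_last.
split.
  move=> [/eig_N ga HM /eig_N Hl].
  have Hall : forall x, x \in a :: t -> gg l x = 0.
    move=> x; rewrite inE => /orP [/eqP -> //|]; move: x; apply/(chain srt ga).
    move=> k kt; have := HM k kt; rewrite eig_M /=.
    have : (nth 0%N (a :: t) k < nth 0%N t k)%N.
      by move/(pathP 0%N): srt => /(_ k kt).
    by move=> lt_k; rewrite -subnDA addn1 subnSK.
  split => //; apply/(last_char (Hall _ lastin) alast) => //.
move=> [gn Hall].
have ga : gg l a = 0 by apply: Hall; rewrite inE eqxx.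
split; first by apply/eig_N.
  move=> k kt; apply/eig_M.
  have lt_k : (nth 0%N (a :: t) k < nth 0%N t k)%N.
    by move/(pathP 0%N): srt => /(_ k kt).
  rewrite -subnDA addn1 subnSK //.
  move: k kt {lt_k}; apply/(chain srt ga) => x xt; apply: Hall; by rewrite inE xt orbT.
by apply/eig_N/(last_char (Hall _ lastin) alast).
Qed.

End Common2.
Section Cx.
Variable R : rcfType.
Local Notation C := (R[i]).
Local Notation toC := (real_complex R).
Local Notation Re := (@complex.Re R).
Local Notation Im := (@complex.Im R).

Lemma ReD (x y : C) : Re (x + y) = Re x + Re y. Proof. by case: x; case: y => a b c d; simpc; reflexivity. Qed.
Lemma ImD (x y : C) : Im (x + y) = Im x + Im y. Proof. by case: x; case: y => a b c d; simpc; reflexivity. Qed.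
Lemma ReM (x : C) (r : R) : Re (x * toC r) = Re x * r.
Proof. case: x => a b; rewrite /toC complexr0; simpc; cbv beta iota delta [complex.Re complex.Im]; ring. Qed.
Lemma ImM (x : C) (r : R) : Im (x * toC r) = Im x * r.
Proof. case: x => a b; rewrite /toC complexr0; simpc; cbv beta iota delta [complex.Re complex.Im]; ring. Qed.
Lemma ReMl (z x : C) : Re (z * x) = Re z * Re x - Im z * Im x.
Proof. by case: x; case: z => a b c d; simpc; reflexivity. Qed.
Lemma ImMl (z x : C) : Im (z * x) = Re z * Im x + Im z * Re x.
Proof. case: x; case: z => a b c d; simpc; cbv beta iota delta [complex.Re complex.Im]; ring. Qed.
Lemma Re_sum I (r : seq I) (P : pred I) (F : I -> C) :
  Re (\sum_(i <- r | P i) F i) = \sum_(i <- r | P i) Re (F i).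
Proof. by apply: (big_morph _ ReD). Qed.
Lemma Im_sum I (r : seq I) (P : pred I) (F : I -> C) :
  Im (\sum_(i <- r | P i) F i) = \sum_(i <- r | P i) Im (F i).
Proof. by apply: (big_morph _ ImD). Qed.
Lemma complex_eq0 (x : C) : Re x = 0 -> Im x = 0 -> x = 0.
Proof. by case: x => a b /= -> ->. Qed.

Definition dp n (u w : 'rV[R]_n) : R := (u *m w^T) 0 0.

Lemma dpE n (u w : 'rV[R]_n) : dp u w = \sum_k u 0 k * w 0 k.
Proof. by rewrite /dp mxE; apply: eq_bigr => k _; rewrite mxE. Qed.

Lemma dpC n (u w : 'rV[R]_n) : dp u w = dp w u.
Proof. by rewrite !dpE; apply: eq_bigr => k _; rewrite mulrC. Qed.

Lemma dpD n (u u' w : 'rV[R]_n) : dp (u + u') w = dp u w + dp u' w.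
Proof. by rewrite !dpE -big_split; apply: eq_bigr => k _; rewrite mxE mulrDl. Qed.

Lemma dpZ n a (u w : 'rV[R]_n) : dp (a *: u) w = a * dp u w.
Proof. by rewrite !dpE mulr_sumr; apply: eq_bigr => k _; rewrite mxE mulrA. Qed.

Lemma dpN n (u w : 'rV[R]_n) : dp (- u) w = - dp u w.
Proof. by rewrite -scaleN1r dpZ mulN1r. Qed.

Lemma dp_ge0 n (u : 'rV[R]_n) : 0 <= dp u u.
Proof. by rewrite dpE sumr_ge0 // => k _; rewrite -expr2 sqr_ge0. Qed.

Lemma dp_eq0 n (u : 'rV[R]_n) : dp u u = 0 -> u = 0.
Proof.
rewrite dpE => H; apply/rowP => k; rewrite mxE.
have H0 : forall i, predT i -> 0 <= u 0 i * u 0 i.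
  by move=> i _; rewrite -expr2 sqr_ge0.
have := psumr_eq0P H0 H (i := k) isT.
by move/eqP; rewrite -expr2 sqrf_eq0 => /eqP.
Qed.


Lemma sym_stable_eig n (A U : 'M[R]_n) : A^T = A -> (U *m A <= U)%MS -> U != 0 ->
  exists l : R, exists v : 'rV_n, [/\ v != 0, (v <= U)%MS & v *m A = l *: v].
Proof.
move=> sA stU U0.
have r0 : (0 < \rank U)%N by rewrite lt0n mxrank_eq0.
set V := row_base U.
have stV : (V *m A <= V)%MS by rewrite (eqmxMr A (eq_row_base U)) eq_row_base.
set A' := V *m A *m pinvmx V.
have AV : A' *m V = V *m A by rewrite mulmxKpV.
have [z /eigenvalueP [y yE y0]] := Theorem7' (map_mx toC A') r0.
set yr := map_mx Re y; set yi := map_mx Im y.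
have Er : yr *m A' = Re z *: yr - Im z *: yi.
  apply/rowP => j; rewrite !mxE.
  move/rowP: yE => /(_ j) /(congr1 Re); rewrite !mxE Re_sum ReMl => <-.
  by apply: eq_bigr => k _; rewrite !mxE ReM.
have Ei : yi *m A' = Im z *: yr + Re z *: yi.
  apply/rowP => j; rewrite !mxE.
  move/rowP: yE => /(_ j) /(congr1 Im); rewrite !mxE Im_sum ImMl [RHS]addrC => E; rewrite -E.
  apply: eq_bigr => k _; rewrite !mxE ImM; by [].
set x1 := yr *m V; set x2 := yi *m V.
have E1 : x1 *m A = Re z *: x1 - Im z *: x2.
  by rewrite /x1 -mulmxA -AV mulmxA Er mulmxBl -!scalemxAl.
have E2 : x2 *m A = Im z *: x1 + Re z *: x2.
  by rewrite /x2 -mulmxA -AV mulmxA Ei mulmxDl -!scalemxAl.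
have nz : (x1 != 0) || (x2 != 0).
  rewrite -negb_and; apply/negP => /andP [/eqP h1 /eqP h2]; move/eqP: y0; apply.
  move/eqP: h1; rewrite mulmx_free_eq0 ?row_base_free // => /eqP h1.
  move/eqP: h2; rewrite mulmx_free_eq0 ?row_base_free // => /eqP h2.
  apply/rowP => j; rewrite [RHS]mxE; apply: complex_eq0.
    by move/rowP: h1 => /(_ j); rewrite !mxE.
  by move/rowP: h2 => /(_ j); rewrite !mxE.
have sym : forall u w : 'rV_n, dp (u *m A) w = dp u (w *m A).
  by move=> u w; rewrite /dp trmx_mul sA mulmxA.
have b0 : Im z = 0.
  have := sym x1 x2; rewrite E1 E2 [dp x1 _]dpC !dpD !dpN !dpZ [dp x2 x1]dpC => E.
  have E' : Im z * (dp x1 x1 + dp x2 x2) = 0.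
    by apply: (solve_eq2 E); ring.
  move/eqP: E'; rewrite mulf_eq0 => /orP [/eqP //|].
  rewrite paddr_eq0 ?dp_ge0 // => /andP [/eqP /dp_eq0 h1 /eqP /dp_eq0 h2].
  by move: nz; rewrite h1 h2 eqxx.
exists (Re z).
have sub1 : forall w : 'rV_(\rank U), (w *m V <= U)%MS.
  by move=> w; rewrite (submx_trans (submxMl w V)) // eq_row_base.
case/orP: nz => [nz1|nz2].
  exists x1; split => //; first exact: sub1.
  by rewrite E1 b0 scale0r subr0.
exists x2; split => //; first exact: sub1.
by rewrite E2 b0 scale0r add0r.
Qed.

End Cx.

Section PBH.
Variable R : rcfType.

Lemma triM_tr k (d : 'I_k -> R) : (triM d)^T = triM d.
Proof.
apply/matrixP => i j; rewrite !mxE eq_sym path_adj_sym.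
by case: eqP => [->|].
Qed.

Lemma pathLap_sym n : (pathLap R n)^T = pathLap R n.
Proof. by rewrite pathLap_tri triM_tr. Qed.

Lemma trX n (A : 'M[R]_n) k : A^T = A -> (A ^+ k)^T = A ^+ k.
Proof.
move=> sA; elim: k => [|k IH]; first by rewrite !expr0 trmx1.
by rewrite exprS -mulmxE trmx_mul IH sA mulmxE -exprSr exprS.
Qed.

Lemma row_mxrow0 n m p (M : 'I_n -> 'M[R]_(m, p)) :
  \mxrow_k M k = 0 -> forall k, M k = 0.
Proof. by move=> H k; rewrite -(mxrowK M k) H submxrow0. Qed.

Lemma inputMat_row n (Io : {set 'I_n}) (w : 'rV[R]_n) (j : 'I_#|Io|) :
  (w *m inputMat R Io) 0 j = w 0 (enum_val j).
Proof.
rewrite mxE (bigD1 (enum_val j)) //= big1 ?addr0; first by rewrite mxE eqxx mulr1.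
by move=> i /negbTE ne; rewrite mxE ne mulr0.
Qed.

Lemma CH_pow n (A : 'M[R]_n.+1) m (U : 'M[R]_(m, n.+1)) p (B : 'M[R]_(n.+1, p)) :
  (forall k, (k < n.+1)%N -> U *m A ^+ k *m B = 0) -> U *m A ^+ n.+1 *m B = 0.
Proof.
move=> H.
have CH := Cayley_Hamilton A.
set c := char_poly A in CH.
have sc : size c = n.+2 by rewrite size_char_poly.
have lc : c`_n.+1 = 1.
  by move: (char_poly_monic A); rewrite monicE /lead_coef sc => /eqP.
have : U *m horner_mx A c *m B = 0 by rewrite CH mulmx0 mul0mx.
rewrite -(coefK c) poly_def sc rmorph_sum big_ord_recr /= lc scale1r.
rewrite rmorphXn /= horner_mx_X mulmxDr mulmxDl.
rewrite mulmx_sumr mulmx_suml big1 ?add0r // => i _.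
by rewrite horner_mxZ rmorphXn /= horner_mx_X -scalemxAr -scalemxAl H ?scaler0.
Qed.

Lemma CH_pow' n (A : 'M[R]_n) m (U : 'M[R]_(m, n)) p (B : 'M[R]_(n, p)) :
  (forall k, (k < n)%N -> U *m A ^+ k *m B = 0) -> U *m A ^+ n *m B = 0.
Proof.
case: n A U B => [|n] A U B H; last exact: CH_pow.
by rewrite [U]thinmx0 !mul0mx.
Qed.

Lemma reach_PBH n (Io : {set 'I_n}) :
  reachable (pathLap R n) (inputMat R Io) <-> ~ exists lam : R, unreachable_eig Io lam.
Proof.
set A := pathLap R n; set B := inputMat R Io.
have sA : A^T = A by exact: pathLap_sym.
set K := \mxrow_(k < n) (A ^+ k *m B).
have rE : reachable A B = row_free K by [].
rewrite rE; split.
  move=> rK [lam [v [v0 vE vI]]].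
  set w := v^T.
  have wA : w *m A = lam *: w by rewrite /w -{1}sA -trmx_mul vE linearZ.
  have wAk : forall k, w *m A ^+ k = lam ^+ k *: w.
    elim => [|k IH]; first by rewrite expr0 mulmx1 scale1r.
    by rewrite exprSr -mulmxE mulmxA IH -scalemxAl wA scalerA exprSr.
  have wB : w *m B = 0.
    apply/rowP => j; rewrite inputMat_row mxE [RHS]mxE; apply: vI; exact: enum_valP.
  have wK : w *m K = 0.
    rewrite mul_mxrow (eq_mxrow (B_ := fun _ => 0)) ?mxrow0 // => k.
    by rewrite mulmxA wAk -scalemxAl wB scaler0.
  by move/eqP: wK; rewrite mulmx_free_eq0 // /w trmx_eq0 (negbTE v0).
move=> H; apply/negPn/negP; rewrite -kermx_eq0 => U0; apply: H.
set U := kermx K.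
have UK : U *m K = 0 by exact: mulmx_ker.
have blocks : forall k : 'I_n, U *m (A ^+ k *m B) = 0.
  by apply: row_mxrow0; rewrite -mul_mxrow.
have blocks' : forall k, (k <= n)%N -> U *m A ^+ k *m B = 0.
  move=> k; rewrite leq_eqVlt => /orP [/eqP ->|kn].
    by apply: CH_pow' => k' kn; rewrite -mulmxA (blocks (Ordinal kn)).
  by rewrite -mulmxA (blocks (Ordinal kn)).
have stU : (U *m A <= U)%MS.
  apply/sub_kermxP; rewrite mul_mxrow (eq_mxrow (B_ := fun _ => 0)) ?mxrow0 // => k.
  have AS : A *m A ^+ k = A ^+ k.+1 by rewrite exprS.
  by rewrite mulmxA -(mulmxA U) AS blocks' // ltn_ord.
have [lam [v [v0 vU vE]]] := sym_stable_eig sA stU U0.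
exists lam; exists v^T; split.
- by rewrite trmx_eq0.
- by change (A *m v^T = lam *: v^T); rewrite -{1}sA -trmx_mul vE linearZ.
- move=> j jI.
  have vK : v *m K = 0 by apply/sub_kermxP.
  have n0' : (0 < n)%N := leq_ltn_trans (leq0n j) (ltn_ord j).
  have vB : v *m B = 0.
    have := row_mxrow0 (esym (etrans (esym vK) (mul_mxrow _ _))) (Ordinal n0').
    by rewrite expr0 mul1mx.
  move/rowP: vB => /(_ (enum_rank_in jI j)); rewrite inputMat_row enum_rankK_in //.
  by rewrite [X in _ = X -> _]mxE mxE.
Qed.

End PBH.

Unset Implicit Arguments.

Theorem mainTheorem7 (R : rcfType) (n : nat) (Io : {set 'I_n}) :
  Io != set0 ->
  [/\ reachable (pathLap R n) (inputMat R Io) <-> ~ (exists lam : R, common_eig Io lam),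
      observable (pathLap R n) (inputMat R Io)^T <-> ~ (exists lam : R, common_eig Io lam)
    & forall lam : R, common_eig Io lam <-> unreachable_eig Io lam].
Proof.
move=> Io0.
have n0 : (0 < n)%N.
  by case/set0Pn: Io0 => j _; exact: (leq_ltn_trans (leq0n j) (ltn_ord j)).
have P3 : forall lam : R, common_eig Io lam <-> unreachable_eig Io lam.
  move=> lam; split => H.
    by apply/(unreach_char lam Io n0); apply/(common_char lam Io0).
  by apply/(common_char lam Io0); apply/(unreach_char lam Io n0).
have RE : reachable (pathLap R n) (inputMat R Io) <-> ~ (exists lam : R, common_eig Io lam).
  have := reach_PBH R Io; case => H1 H2; split.
    by move=> /H1 H [lam Hl]; apply: H; exists lam; exact/P3.
  by move=> H; apply: H2 => -[lam Hl]; apply: H; exists lam; exact/P3.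
have OE : observable (pathLap R n) (inputMat R Io)^T = reachable (pathLap R n) (inputMat R Io).
  rewrite /observable /reachable -mxrank_tr tr_mxcol; congr (\rank _ == n).
  apply: eq_mxrow => k; rewrite trmx_mul trmxK trX //; exact: pathLap_sym.
by split => //; rewrite OE.
Qed.
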